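(* Let $S$ be a complex Enriques surface, $\pi:\tilde S\to S$ its K3 cover with covering involution $\varepsilon$, $N=(H^2(\tilde S,\mathbb{Z})^{\varepsilon})^{\perp}\subset H^2(\tilde S,\mathbb{Z})$, $f\in\mathrm{Aut}(S)$ with a lift $\tilde f\in\mathrm{Aut}(\tilde S)$, $f_N=\tilde f^*|_N$, and let $p_N(x)=\det(xI-f_N)$ be the characteristic polynomial of $f_N$. Then: (a) the reduction of $p_N(x)$ modulo $2$ is divisible by $x^2+1=(x+1)^2$ in $\mathbb{F}_2[x]$; (b) $p_N(1)\,p_N(-1)$ is either zero or a square in $\mathbb{Q}^*$.
   Context: $N$ is a lattice of rank 12 isomorphic to $U\oplus U(2)\oplus E_8(2)$; $\tilde f^*$ preserves $N$ since $\tilde f$ commutes with $\varepsilon$. *)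

(* Defs.v *)
From HB Require Import structures.
From mathcomp Require Import all_boot all_order all_algebra.
Set Implicit Arguments. Unset Strict Implicit. Unset Printing Implicit Defensive.
Import Order.TTheory GRing.Theory Num.Theory.
Local Open Scope ring_scope.

Definition e8_edge (a b : nat) : bool :=
  [|| (a.+1 == b)%N && (b <= 6)%N, (b.+1 == a)%N && (a <= 6)%N,
      (a == 4%N) && (b == 7%N) | (a == 7%N) && (b == 4%N)].

(* Entries of the negative definite E8 lattice E8(-1) (minus the Cartan matrix). *)
Definition e8_entry (a b : nat) : int :=
  if a == b then (-2)%R else if e8_edge a b then 1%R else 0%R.

(* Gram matrix of N = U + U(2) + E8(2) in a standard basis of Z^12:
   indices 0,1 : U ; 2,3 : U(2) ; 4..11 : E8(2) (= 2 * E8(-1) as in the K3 convention). *)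
Definition gramN_entry (i j : nat) : int :=
  if (i < 2)%N && (j < 2)%N then (if i == j then 0 else 1)%R
  else if (2 <= i < 4)%N && (2 <= j < 4)%N then (if i == j then 0 else 2)%R
  else if (4 <= i)%N && (4 <= j)%N then (2 * e8_entry (i - 4) (j - 4))%R
  else 0%R.

Definition gramN : 'M[int]_12 := \matrix_(i, j) gramN_entry i j.

Definition isometryN (M : 'M[int]_12) : Prop := M^T *m gramN *m M = gramN.

Definition red2 (p : {poly int}) : {poly 'F_2} := map_poly (fun z : int => z%:~R) p.

(* Main.v *)
Require Import Defs.
From HB Require Import structures.
From mathcomp Require Import all_boot all_order all_algebra all_fingroup.
From mathcomp Require Import ring.
Set Implicit Arguments. Unset Strict Implicit. Unset Printing Implicit Defensive.
Import Order.TTheory GRing.Theory Num.Theory.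
Local Open Scope ring_scope.


Definition schur (F : fieldType) (f : nat -> nat -> F) i j :=
  f i.+1 j.+1 - f i.+1 0%N * f 0%N j.+1 / f 0%N 0%N.
Definition tab (F : fieldType) (n : nat) (g : nat -> nat -> F) : nat -> nat -> F :=
  let L := mkseq (fun i => mkseq (g i) n) n in fun i j => nth 0 (nth [::] L i) j.
Fixpoint pivprod (F : fieldType) (n : nat) (f : nat -> nat -> F) : F :=
  match n with 0 => 1 | n'.+1 => f 0%N 0%N * pivprod n' (tab n' (schur f)) end.
Fixpoint pivok (F : fieldType) (n : nat) (f : nat -> nat -> F) : bool :=
  match n with 0 => true | n'.+1 => (f 0%N 0%N != 0) && pivok n' (tab n' (schur f)) end.

Definition mkmx (F : fieldType) n (f : nat -> nat -> F) : 'M[F]_n := \matrix_(i < n, j < n) f i j.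

Lemma det_schur1 (F : fieldType) n (f : nat -> nat -> F) : f 0%N 0%N != 0 ->
  \det (mkmx n.+1 f) = f 0%N 0%N * \det (mkmx n (schur f)).
Proof.
move=> f0.
set M : 'M[F]_(1 + n) := mkmx n.+1 f.
set a := ulsubmx M; set B := ursubmx M; set C := dlsubmx M; set D := drsubmx M.
have ha : a = (f 0%N 0%N)%:M.
  by apply/matrixP => i j; rewrite !ord1 !mxE /=.
have -> : M = block_mx 1%:M 0 ((f 0%N 0%N)^-1 *: C) 1%:M *m
              block_mx a B 0 (D - (f 0%N 0%N)^-1 *: (C *m B)).
  rewrite mulmx_block !mul1mx !mul0mx !addr0.
  have -> : (f 0%N 0%N)^-1 *: C *m a = C.
    by rewrite ha mul_mx_scalar scalerA mulrC mulVf // scale1r.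
  rewrite -scalemxAl addrCA subrr addr0.
  by rewrite /a /B /C /D submxK.
rewrite det_mulmx (@det_lblock _ 1 n) !det1 mul1r (@det_ublock _ 1 n) ha det_mx11 mxE eqxx mulr1n.
rewrite mul1r; congr (_ * _); congr (\det _); apply/matrixP => i j.
rewrite /D /C /B /M /mkmx !mxE big_ord1 !mxE /schur /=.
by rewrite !add1n mulrC.
Qed.

Lemma det_pivprod (F : fieldType) n (f : nat -> nat -> F) : pivok n f ->
  \det (mkmx n f) = pivprod n f.
Proof.
elim: n f => [|n IH] f /=.
  by move=> _; rewrite det_mx00.
case/andP => f0 ok; rewrite det_schur1 // -IH //; congr (_ * \det _).
by apply/matrixP => i j; rewrite !mxE /tab !nth_mkseq.
Qed.


Definition Gq : 'M[rat]_12 := map_mx (intr : int -> rat) gramN.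
Definition sw (j : nat) : nat :=
  if j == 0%N then 1%N else if j == 1%N then 0%N else
  if j == 2%N then 3%N else if j == 3%N then 2%N else j.
Definition gsw (i j : nat) : rat := (gramN_entry i (sw j))%:~R.

Definition o0 : 'I_12 := @Ordinal 12 0 isT.
Definition o1 : 'I_12 := @Ordinal 12 1 isT.
Definition o2 : 'I_12 := @Ordinal 12 2 isT.
Definition o3 : 'I_12 := @Ordinal 12 3 isT.

Lemma det_xcol n (A : 'M[rat]_n) i j : i != j -> \det (xcol i j A) = - \det A.
Proof.
move=> ij; rewrite xcolE det_mulmx /tperm_mx det_perm odd_tperm ij.
by rewrite expr1 mulrN1.
Qed.

Lemma sw_val (j : 'I_12) : nat_of_ord (tperm o0 o1 (tperm o2 o3 j)) = sw j.
Proof.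
case: j => -[|[|[|[|m]]]] Hm.
- have -> : Ordinal Hm = o0 by apply: val_inj.
  by rewrite (tpermD (x:=o2)) // tpermL.
- have -> : Ordinal Hm = o1 by apply: val_inj.
  by rewrite (tpermD (x:=o2)) // tpermR.
- have -> : Ordinal Hm = o2 by apply: val_inj.
  by rewrite tpermL (tpermD (x:=o0)).
- have -> : Ordinal Hm = o3 by apply: val_inj.
  by rewrite tpermR (tpermD (x:=o0)).
- by rewrite (tpermD (x:=o2)) // (tpermD (x:=o0)).
Qed.

Lemma detGq : \det Gq = 1024.
Proof.
have -> : \det Gq = \det (xcol o2 o3 (xcol o0 o1 Gq)).
  by rewrite !det_xcol // opprK.
have -> : xcol o2 o3 (xcol o0 o1 Gq) = mkmx 12 gsw.
  apply/matrixP => i j; rewrite /mkmx /Gq !mxE.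
  by rewrite sw_val.
rewrite det_pivprod; first by apply/eqP; vm_compute.
by vm_compute.
Qed.

Lemma skew_diag n (S : 'M[rat]_n) i : S^T = - S -> S i i = 0.
Proof.
move=> /matrixP /(_ i i); rewrite !mxE => h.
have : S i i *+ 2 = 0 by rewrite mulr2n {1}h addNr.
by move/eqP; rewrite mulrn_eq0 /= => /eqP.
Qed.

Lemma det2 (R : comNzRingType) (A : 'M[R]_2) : \det A = A 0 0 * A 1 1 - A 0 1 * A 1 0.
Proof.
rewrite (expand_det_row _ 0) !big_ord_recr big_ord0 /= add0r.
rewrite /cofactor !det_mx11 !mxE /= expr0 expr1 !mul1r mulN1r mulrN.
have -> : widen_ord (leqnSn 1) ord_max = 0 :> 'I_2 by apply/val_inj.
have -> : lift (0 : 'I_2) (0 : 'I_1) = 1 :> 'I_2 by apply/val_inj.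
have -> : lift (ord_max : 'I_2) (0 : 'I_1) = 0 :> 'I_2 by apply/val_inj.
have -> : ord_max = 1 :> 'I_2 by apply/val_inj.
done.
Qed.

Lemma skew_key m (S : 'M[rat]_(2 + m)) : S^T = - S -> ulsubmx S 0 1 != 0 ->
  exists2 S2 : 'M[rat]_m, S2^T = - S2 & \det S = (ulsubmx S 0 1) ^+ 2 * \det S2.
Proof.
move=> sk a0.
set A := ulsubmx S; set B := ursubmx S; set C := dlsubmx S; set D := drsubmx S.
have eS : S = block_mx A B C D by rewrite submxK.
have : (block_mx A B C D)^T = - block_mx A B C D by rewrite -eS.
rewrite tr_block_mx opp_block_mx => /eq_block_mx [eA eC eB eD].
have dA : \det A = (A 0 1) ^+ 2.
  have h1 : A 0 0 = 0 by apply: skew_diag; rewrite eA.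
  have h3 : A 1 1 = 0 by apply: skew_diag; rewrite eA.
  have h2 : A 1 0 = - A 0 1.
    by move/matrixP: (eA) => /(_ 1 0); rewrite !mxE => ->; rewrite opprK.
  by rewrite det2 h1 h2 h3 mul0r mulrN sub0r opprK expr2.
have uA : A \in unitmx by rewrite unitmxE dA unitfE expf_neq0.
have invN : invmx (- A) = - invmx A.
  rewrite -scaleN1r invmxZ ?invrN1 ?scaleN1r //.
  by rewrite unitmxE -scaleN1r detZ unitfE mulf_neq0 ?expf_neq0 ?oppr_eq0 ?oner_eq0 // -unitfE -unitmxE.
exists (D - C *m invmx A *m B).
  rewrite raddfB /= !trmx_mul trmx_inv eA eB eC eD invN.
  by rewrite !mulNmx !mulmxN !opprK opprB addrC mulmxA.
have -> : \det S = \det (block_mx 1%:M 0 (C *m invmx A) 1%:M *m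
              block_mx A B 0 (D - C *m invmx A *m B)).
  congr (\det _); rewrite mulmx_block !mul1mx !mul0mx !addr0 -mulmxA mulVmx // mulmx1.
  rewrite addrCA subrr addr0. exact: eS.
by rewrite (@det_mulmx _ (2 + m)) (@det_lblock _ 2 m) !det1 mul1r (@det_ublock _ 2 m) dA mul1r.
Qed.

Lemma skew_det_sq n (S : 'M[rat]_n) : S^T = - S -> exists c, \det S = c ^+ 2.
Proof.
elim: n {-2}n (leqnn n) S => [|N IH] n.
  by rewrite leqn0 => /eqP -> S _; exists 1; rewrite det_mx00 expr1n.
case: n => [|[|m]] le S sk.
- by exists 1; rewrite det_mx00 expr1n.
- by exists 0; rewrite det_mx11 skew_diag // expr0n.
case: (pickP (fun j => S 0 j != 0)) => [j Hj|none]; last first.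
  exists 0; rewrite expr0n /= (expand_det_row _ 0) big1 // => j _.
  by move: (none j) => /negbFE /eqP ->; rewrite mul0r.
have j0 : j != 0.
  by apply: contraNneq Hj => ->; rewrite skew_diag.
pose o1 : 'I_(m.+2) := @Ordinal (m.+2) 1 isT.
pose P := tperm_mx o1 j : 'M[rat]_(m.+2).
pose T := P *m S *m P.
have skT : T^T = - T.
  by rewrite /T !trmx_mul !tr_tperm_mx sk mulNmx mulmxN mulmxA.
have dT : \det T = \det S.
  rewrite /T !det_mulmx /P /tperm_mx det_perm mulrC mulrA -signr_addb addbb.
  by rewrite expr0 mul1r.
have eT : ulsubmx (T : 'M_(2 + m)) 0 1 = S 0 j.
  rewrite /T /P -xrowE -xcolE !mxE.
  have -> : lshift m (0 : 'I_2) = 0 :> 'I_(m.+2) by apply/val_inj.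
  have -> : lshift m (1 : 'I_2) = o1 by apply/val_inj.
  by rewrite tpermL (tpermD (x := o1)) //; apply/eqP => /(congr1 val).
have [S2 sk2 dS2] := skew_key skT (ltac:(by rewrite eT)).
have [c dc] := IH m (ltnW (le : (m < N)%N)) S2 sk2.
by exists (S 0 j * c); rewrite -dT dS2 eT dc exprMn.
Qed.

Lemma char_poly_lblock (R : comNzRingType) m n (A : 'M[R]_m) (C : 'M[R]_(n, m)) D :
  char_poly (block_mx A 0 C D) = char_poly A * char_poly D.
Proof.
rewrite /char_poly /char_poly_mx map_block_mx (scalar_mx_block m n).
rewrite opp_block_mx add_block_mx map_mx0 oppr0 addr0 (@det_lblock _ m n).
by [].
Qed.

Lemma g2 (i j : nat) :
  (gramN_entry i j)%:~R = ((i < 2)%N && (j < 2)%N && (i != j))%:R :> 'F_2.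
Proof.
rewrite /gramN_entry.
move: i j => [|[|i]] [|[|j]] //=; rewrite ?andbF //.
have h2 : (2%:~R : 'F_2) = 0 by apply/val_inj.
case: ifP => _; first by case: ifP => _ //.
case: ifP => _ //.
by rewrite intrM h2 mul0r.
Qed.

Definition J2 : 'M['F_2]_2 := \matrix_(i, j) (i != j)%:R.

Lemma G2blk : (map_mx (intr : int -> 'F_2) gramN : 'M_(2 + 10)) = block_mx J2 0 0 0.
Proof.
apply/matrixP => i j.
case: (split_ordP i) => i' ->; case: (split_ordP j) => j' ->;
  rewrite ?block_mxEul ?block_mxEur ?block_mxEdl ?block_mxEdr !mxE g2 /=.
- by rewrite !ltn_ord.
- by rewrite [(2 + _ < 2)%N]ltnNge leq_addr andbF.
- by [].
- by [].
Qed.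

Lemma F2cases (x : 'F_2) : x = 0 \/ x = 1.
Proof. by case: x => -[|[|n]] Hn; [left; apply: val_inj | right; apply: val_inj |]. Qed.

Lemma detJ2 : \det J2 = 1.
Proof. by rewrite det2 !mxE /=; apply/val_inj. Qed.

Lemma charA (a b c d : 'F_2) : a * c = 0 -> b * d = 0 -> (a * d - b * c) ^+ 2 = 1 ->
  a + d = 0 /\ a * d - b * c = 1.
Proof.
by case: (F2cases a) => ->; case: (F2cases b) => ->; case: (F2cases c) => ->;
  case: (F2cases d) => ->; move=> h1 h2 h3; split; apply/val_inj; move: h1 h2 h3;
  move=> /(congr1 val) h1 /(congr1 val) h2 /(congr1 val) h3.
Qed.

Lemma char_poly2 (A : 'M['F_2]_2) : A 0 0 + A 1 1 = 0 ->
  A 0 0 * A 1 1 - A 0 1 * A 1 0 = 1 -> char_poly A = 'X^2 + 1.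
Proof.
move=> htr hdet.
rewrite /char_poly det2 !mxE /=.
have hd : A 1 1 = - A 0 0 by apply/eqP; rewrite -addr_eq0 addrC htr.
move: hdet; rewrite hd => /(congr1 (fun x => x%:P)).
rewrite !(rmorphB, rmorphN, rmorphM) /= => h.
rewrite -[1 in RHS]h ?polyCN.
ring.
Qed.
Definition Rq (x : nat -> int) : int :=
  x 2%N * x 3%N - (x 4%N ^+ 2 + x 5%N ^+ 2 + x 6%N ^+ 2 + x 7%N ^+ 2 + x 8%N ^+ 2
    + x 9%N ^+ 2 + x 10%N ^+ 2 + x 11%N ^+ 2)
  + (x 4%N * x 5%N + x 5%N * x 6%N + x 6%N * x 7%N + x 7%N * x 8%N + x 8%N * x 9%N
    + x 9%N * x 10%N + x 8%N * x 11%N).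

Lemma Qform (x : nat -> int) :
  \sum_(b < 12) (\sum_(a < 12) x a * gramN_entry a b) * x b =
  2 * (x 0%N * x 1%N) + 4 * Rq x.
Proof.
rewrite !big_ord_recr !big_ord0 /=.
rewrite /gramN_entry /e8_entry /e8_edge /= /Rq.
ring.
Qed.

Lemma colfact (fN : 'M[int]_12) (k : 'I_12) : isometryN fN -> (k < 2)%N ->
  (fN (inord 0) k)%:~R * (fN (inord 1) k)%:~R = 0 :> 'F_2.
Proof.
move=> iso hk.
pose x : nat -> int := fun a => fN (inord a) k.
have E : \sum_(b < 12) (\sum_(a < 12) x a * gramN_entry a b) * x b
         = (fN^T *m gramN *m fN) k k.
  rewrite !mxE; apply: eq_bigr => b _; rewrite !mxE /x inord_val; congr (_ * _).
  by apply: eq_bigr => a _; rewrite !mxE inord_val.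
move: E; rewrite iso Qform mxE /gramN_entry hk eqxx /= => E.
have h2 : (2%:~R : 'F_2) = 0 by apply/val_inj.
rewrite -intrM.
have -> : fN (inord 0) k * fN (inord 1) k = - (2 * Rq x).
  by apply/eqP; rewrite -addr_eq0 -[X in X + _]/(x 0%N * x 1%N); apply/eqP; 
     move: E; rewrite -[4]/(2 * 2 : int) -mulrA -mulrDr => /eqP; rewrite mulf_eq0 /= => /eqP.
by rewrite mulrNz intrM h2 mul0r oppr0.
Qed.

Lemma partA (fN : 'M[int]_12) : isometryN fN ->
  ('X^2 + 1 : {poly 'F_2}) %| red2 (char_poly fN).
Proof.
move=> iso.
pose M2 : 'M['F_2]_(2 + 10) := map_mx (intr : int -> 'F_2) fN.
have -> : red2 (char_poly fN) = char_poly M2 by exact: map_char_poly.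
have iso2 : M2^T *m block_mx J2 0 0 0 *m M2 = block_mx J2 0 0 0.
  have h := congr1 (map_mx (intr : int -> 'F_2)) iso.
  rewrite !map_mxM -map_trmx in h.
  by rewrite -G2blk; exact: h.
set A := ulsubmx M2; set B := ursubmx M2; set C := dlsubmx M2; set D := drsubmx M2.
have eM : M2 = block_mx A B C D by rewrite submxK.
move: iso2; rewrite eM tr_block_mx !mulmx_block !mulmx0 !addr0 !mul0mx !addr0.
move=> /eq_block_mx [e1 e2 _ _].
have dA : \det A * \det A = 1.
  by move: (congr1 determinant e1); rewrite !det_mulmx det_tr detJ2 mulr1.
have uA : A \in unitmx.
  by rewrite unitmxE unitfE; apply: contra_eq_neq dA => ->; rewrite mul0r eq_sym oner_neq0.
have uJ : J2 \in unitmx by rewrite unitmxE detJ2 unitr1.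
have uAJ : A^T *m J2 \in unitmx by rewrite unitmx_mul unitmx_tr uA.
have eB : B = 0.
  by rewrite -(mulKmx uAJ B) e2 mulmx0.
rewrite eB char_poly_lblock.
suff -> : char_poly A = 'X^2 + 1 by apply: dvdp_mulIl.
have cA k : A 0 k * A 1 k = 0.
  have := @colfact fN (lshift 10 k) iso (ltn_ord k).
  rewrite /A /M2 !mxE.
  have -> : inord 0 = lshift 10 (0 : 'I_2) by apply/val_inj; rewrite /= inordK.
  by have -> : inord 1 = lshift 10 (1 : 'I_2) by apply/val_inj; rewrite /= inordK.
have h3 : (A 0 0 * A 1 1 - A 0 1 * A 1 0) ^+ 2 = 1 by rewrite expr2 -det2.
have [htr hdet] := charA (cA 0) (cA 1) h3.
by apply: char_poly2.
Qed.

Lemma orb4_swap (A B C1 C2 D1 D2 : bool) :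
  [|| A, B, C1 && C2 | D1 && D2] = [|| B, A, D2 && D1 | C2 && C1].
Proof. by case: A; case: B; case: C1; case: C2; case: D1; case: D2. Qed.

Lemma e8_edge_sym a b : e8_edge a b = e8_edge b a.
Proof. rewrite /e8_edge; exact: orb4_swap. Qed.

Lemma gramN_sym : gramN^T = gramN.
Proof.
apply/matrixP => i j; rewrite !mxE /gramN_entry /e8_entry e8_edge_sym.
rewrite [(j < 2)%N && _]andbC [(2 <= j < 4)%N && _]andbC [(4 <= j)%N && _]andbC.
by rewrite (eq_sym (j : nat)) (eq_sym (j - 4)%N).
Qed.

Lemma char_poly_horner n (A : 'M[rat]_n) (a : rat) :
  (char_poly A).[a] = \det (a%:M - A).
Proof.
rewrite /char_poly -horner_evalE -det_map_mx; congr (\det _).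
apply/matrixP => i j; rewrite !mxE ?horner_evalE.
by rewrite rmorphB rmorphMn /= !horner_evalE hornerX hornerC.
Qed.

Lemma partB (fN : 'M[int]_12) : isometryN fN ->
  let pN := char_poly fN in
  (pN.[1] * pN.[-1] = 0 \/
   exists q : rat, q != 0 /\ (pN.[1] * pN.[-1])%:~R = q ^+ 2).
Proof.
move=> iso pN.
pose Mq : 'M[rat]_12 := map_mx (intr : int -> rat) fN.
have isoq : Mq^T *m Gq *m Mq = Gq.
  have h := congr1 (map_mx (intr : int -> rat)) iso.
  by rewrite !map_mxM -map_trmx in h.
have GqT : Gq^T = Gq by rewrite /Gq map_trmx gramN_sym.
have hval (x : int) : (pN.[x])%:~R = \det (x%:~R%:M - Mq).
  by rewrite -char_poly_horner /Mq -map_char_poly horner_map.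
set P1 := \det (1%:M - Mq); set Pm := \det ((-1)%:M - Mq).
have E : (pN.[1] * pN.[-1])%:~R = P1 * Pm.
  by rewrite intrM !hval mulrNz mulr1z.
have dG : \det Gq = 1024 := detGq.
have dG0 : \det Gq != 0 by rewrite dG.
case: (boolP (P1 * Pm == 0)) => [h|h].
  by left; apply/eqP; rewrite -(intr_eq0 rat) E.
right.
have [P10 Pm0] : P1 != 0 /\ Pm != 0.
  by move: h; rewrite mulf_eq0 negb_or => /andP.
have hdM : \det Mq = 1.
  have e1 : (1%:M - Mq)^T *m Gq *m Mq = Gq *m (- (1%:M - Mq)).
    rewrite raddfB /= tr_scalar_mx mulmxBl mul1mx mulmxBl isoq.
    by rewrite mulmxN mulmxBr mulmx1 opprB.
  move: (congr1 determinant e1); rewrite !det_mulmx det_tr.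
  rewrite -[- (1%:M - Mq)]scaleN1r detZ -/P1.
  have s12 : (-1 : rat) ^+ 12 = 1 by rewrite -signr_odd /= expr0.
  rewrite s12 mul1r => H.
  have : P1 * \det Gq * (\det Mq - 1) = 0.
    by rewrite mulrBr mulr1 H mulrC subrr.
  by move/eqP; rewrite !mulf_eq0 (negbTE P10) (negbTE dG0) /= subr_eq0 => /eqP.
pose S := Gq *m Mq - Mq^T *m Gq.
have skS : S^T = - S.
  by rewrite /S raddfB /= !trmx_mul GqT trmxK opprB.
have aux : (1%:M - Mq) *m ((-1)%:M - Mq) = Mq *m Mq - 1%:M.
  rewrite -[(-1)%:M]scalemx1 scaleN1r mulmxBl mul1mx mulmxBr mulmxN mulmx1.
  by rewrite opprB opprK addrC -addrA (addrCA Mq) subrr addr0.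
have eS : S *m Mq = Gq *m ((1%:M - Mq) *m ((-1)%:M - Mq)).
  by rewrite aux /S mulmxBl isoq mulmxBr mulmx1 mulmxA.
have hS : \det S = 1024 * (P1 * Pm).
  by move: (congr1 determinant eS); rewrite !det_mulmx hdM mulr1 dG.
have [c hc] := skew_det_sq skS.
have c0 : c != 0.
  apply: contra_neq h => c0; apply/eqP.
  have := hS; rewrite hc c0 expr0n /= => /esym/eqP; rewrite mulf_eq0 => /orP [] //.
exists (c / 32); split.
  by rewrite mulf_neq0 // invr_eq0.
rewrite E expr_div_n -hc hS.
have e32 : (32 : rat) ^+ 2 = 1024 by rewrite -natrX.
by rewrite e32 [1024 * _]mulrC mulfK // pnatr_eq0.
Qed.

Unset Implicit Arguments.

Theorem lemma2p2 (fN : 'M[int]_12) :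
  isometryN fN ->
  let pN := char_poly fN in
  (('X^2 + 1 : {poly 'F_2}) %| red2 pN)%R /\
  (pN.[1] * pN.[-1] = 0 \/
   exists q : rat, q != 0 /\ (pN.[1] * pN.[-1])%:~R = q ^+ 2).
Proof.
move=> iso pN; split; first exact: partA.
exact: (partB iso).
Qed.
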